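(* Let $Q\in\mathbb{Z}[x_1,\dots,x_n]$ be an integral form with $\alpha_Q>2$. Then $q^{1-n}|V_\lambda(q)|\lesssim1$ uniformly in integers $q\ge1$ and $\lambda\in\mathbb{Z}$.
   Context: $e(t)=e^{2\pi it}$, $Z_q=\mathbb{Z}/q\mathbb{Z}$, $U_q=Z_q^*$ ($U_1=Z_1=\{0\}$). $V_\lambda(q)=\{s\in Z_q^n: Q(s)\equiv\lambda\ (\mathrm{mod}\ q)\}$. $F_q(a,\mathbf{a})=q^{-n}\sum_{s\in Z_q^n}e(Q(s)a/q+s\cdot\mathbf{a}/q)$ and $\alpha_Q=\sup\{\beta\ge0:\ \sup_{q\ge1}\sup_{a\in U_q,\ \mathbf{a}\in Z_q^n}q^\beta|F_q(a,\mathbf{a})|<\infty\}$. *)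

(* Defs.v *)
From Stdlib Require Import Reals ZArith List.
Import ListNotations.
Open Scope R_scope.

(* An integral polynomial in n variables, as a list of monomials
   (coefficient, exponent vector). *)
Definition zpoly := list (Z * list nat).

Fixpoint mono_eval (e : list nat) (s : list Z) : Z :=
  match e, s with
  | k :: e', x :: s' => (x ^ Z.of_nat k * mono_eval e' s')%Z
  | _, _ => 1%Z
  end.

Definition poly_eval (Q : zpoly) (s : list Z) : Z :=
  fold_right (fun m acc => (fst m * mono_eval (snd m) s + acc)%Z) 0%Z Q.

Definition is_form (n : nat) (Q : zpoly) : Prop :=
  exists d : nat, forall m, In m Q ->
    length (snd m) = n /\ fold_right plus 0%nat (snd m) = d.

Definition Zq (q : nat) : list Z := map Z.of_nat (seq 0 q).

Fixpoint Zqn (n q : nat) : list (list Z) :=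
  match n with
  | O => [ [] ]
  | S n' => flat_map (fun x => map (cons x) (Zqn n' q)) (Zq q)
  end.

(* U_q: units of Z_q (for q = 1 this is {0}, since gcd(0,1) = 1). *)
Definition in_Uq (q : nat) (a : Z) : Prop :=
  (0 <= a < Z.of_nat q)%Z /\ Z.gcd a (Z.of_nat q) = 1%Z.

Definition dotZ (s t : list Z) : Z :=
  fold_right Z.add 0%Z (map (fun p => (fst p * snd p)%Z) (combine s t)).

(* e(t) = exp(2 pi i t) = cos(2 pi t) + i sin(2 pi t). *)
Definition phase (Q : zpoly) (q : nat) (a : Z) (av s : list Z) : R :=
  2 * PI * (IZR (poly_eval Q s * a + dotZ s av) / INR q).

(* Real and imaginary parts of F_q(a, av) and its modulus. *)
Definition F_re (n : nat) (Q : zpoly) (q : nat) (a : Z) (av : list Z) : R :=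
  / (INR q ^ n) * fold_right Rplus 0 (map (fun s => cos (phase Q q a av s)) (Zqn n q)).
Definition F_im (n : nat) (Q : zpoly) (q : nat) (a : Z) (av : list Z) : R :=
  / (INR q ^ n) * fold_right Rplus 0 (map (fun s => sin (phase Q q a av s)) (Zqn n q)).
Definition F_abs (n : nat) (Q : zpoly) (q : nat) (a : Z) (av : list Z) : R :=
  sqrt (F_re n Q q a av ^ 2 + F_im n Q q a av ^ 2).

(* beta belongs to the set whose supremum is alpha_Q. *)
Definition alpha_admissible (n : nat) (Q : zpoly) (beta : R) : Prop :=
  0 <= beta /\
  exists C : R, forall (q : nat) (a : Z) (av : list Z),
    (1 <= q)%nat -> in_Uq q a -> In av (Zqn n q) ->
    Rpower (INR q) beta * F_abs n Q q a av <= C.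

(* alpha_Q > c  iff  sup{beta >= 0 : admissible} > c
   iff some admissible beta exceeds c (alpha_Q may be +infinity). *)
Definition alpha_gt (n : nat) (Q : zpoly) (c : R) : Prop :=
  exists beta, c < beta /\ alpha_admissible n Q beta.

Definition V_card (n : nat) (Q : zpoly) (lam : Z) (q : nat) : nat :=
  length (filter (fun s => Z.eqb (Z.modulo (poly_eval Q s - lam) (Z.of_nat q)) 0)
                 (Zqn n q)).

(* Main.v *)
Require Import Defs.
From Stdlib Require Import Reals ZArith List Lra Lia.
Import ListNotations.
Open Scope R_scope.

Definition sumR {A} (f : A -> R) (l : list A) : R := fold_right Rplus 0 (map f l).

Lemma sumR_nil {A} (f : A -> R) : sumR f [] = 0.
Proof. reflexivity. Qed.
Lemma sumR_cons {A} (f : A -> R) x l : sumR f (x :: l) = f x + sumR f l.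
Proof. reflexivity. Qed.
Lemma sumR_app {A} (f : A -> R) l1 l2 : sumR f (l1 ++ l2) = sumR f l1 + sumR f l2.
Proof. induction l1; simpl; [unfold sumR; simpl; lra|]. unfold sumR in *; simpl. rewrite IHl1; lra. Qed.
Lemma sumR_ext_in {A} (f g : A -> R) l : (forall x, In x l -> f x = g x) -> sumR f l = sumR g l.
Proof. induction l; intros H; [reflexivity|]. rewrite !sumR_cons. rewrite H by (left; auto).
 rewrite IHl; auto. intros; apply H; right; auto. Qed.
Lemma sumR_le_in {A} (f g : A -> R) l : (forall x, In x l -> f x <= g x) -> sumR f l <= sumR g l.
Proof. induction l; intros H; [unfold sumR; simpl; lra|]. rewrite !sumR_cons.
 assert (f a <= g a) by (apply H; left; auto). assert (sumR f l <= sumR g l) by (apply IHl; intros; apply H; right; auto). lra. Qed.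
Lemma sumR_plus {A} (f g : A -> R) l : sumR (fun x => f x + g x) l = sumR f l + sumR g l.
Proof. induction l; [unfold sumR; simpl; lra|]. rewrite !sumR_cons, IHl; lra. Qed.
Lemma sumR_scal {A} (c : R) (f : A -> R) l : sumR (fun x => c * f x) l = c * sumR f l.
Proof. induction l; [unfold sumR; simpl; lra|]. rewrite !sumR_cons, IHl; lra. Qed.
Lemma sumR_zero {A} l : sumR (fun _ : A => 0) l = 0.
Proof. induction l; [reflexivity|]. rewrite sumR_cons, IHl; lra. Qed.
Lemma sumR_const {A} (c : R) l : sumR (fun _ : A => c) l = INR (length l) * c.
Proof. induction l; [unfold sumR; simpl; lra|]. rewrite sumR_cons, IHl. simpl length. rewrite S_INR; lra. Qed.
Lemma sumR_map {A B} (f : B -> R) (h : A -> B) l : sumR f (map h l) = sumR (fun x => f (h x)) l.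
Proof. unfold sumR. rewrite map_map. reflexivity. Qed.
Lemma sumR_flat_map {A B} (f : B -> R) (F : A -> list B) l :
  sumR f (flat_map F l) = sumR (fun x => sumR f (F x)) l.
Proof. induction l; [reflexivity|]. simpl flat_map. rewrite sumR_app, sumR_cons, IHl; reflexivity. Qed.
Lemma sumR_swap {A B} (F : A -> B -> R) l m :
  sumR (fun x => sumR (fun y => F x y) m) l = sumR (fun y => sumR (fun x => F x y) l) m.
Proof. induction l.
 - rewrite sumR_nil. symmetry. apply (sumR_zero m).
 - rewrite sumR_cons, IHl. rewrite <- sumR_plus. apply sumR_ext_in. intros; rewrite sumR_cons; reflexivity. Qed.
Lemma sumR_nonneg {A} (f : A -> R) l : (forall x, In x l -> 0 <= f x) -> 0 <= sumR f l.
Proof. intros H. rewrite <- (sumR_zero l). apply sumR_le_in. auto. Qed.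
Lemma sumR_seq_shift (f : nat -> R) s k : sumR f (seq s k) = sumR (fun j => f (s + j)%nat) (seq 0 k).
Proof. revert s f; induction k; intros s f; [reflexivity|].
 simpl seq. rewrite !sumR_cons. rewrite IHk. rewrite (IHk 1%nat).
 rewrite Nat.add_0_r. f_equal. apply sumR_ext_in; intros; f_equal; lia. Qed.

Lemma cos_Zper x z : cos (x + 2 * PI * IZR z) = cos x.
Proof. destruct (Z_le_gt_dec 0 z).
 - rewrite <- (Z2Nat.id z) by lia. rewrite <- INR_IZR_INZ.
   replace (x + 2 * PI * INR (Z.to_nat z)) with (x + 2 * INR (Z.to_nat z) * PI) by ring. apply cos_period.
 - replace z with (- Z.of_nat (Z.to_nat (-z)))%Z by lia. rewrite opp_IZR, <- INR_IZR_INZ.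
   set (k := Z.to_nat (-z)). rewrite <- (cos_period (x + 2 * PI * - INR k) k). f_equal; ring. Qed.
Lemma sin_Zper x z : sin (x + 2 * PI * IZR z) = sin x.
Proof. destruct (Z_le_gt_dec 0 z).
 - rewrite <- (Z2Nat.id z) by lia. rewrite <- INR_IZR_INZ.
   replace (x + 2 * PI * INR (Z.to_nat z)) with (x + 2 * INR (Z.to_nat z) * PI) by ring. apply sin_period.
 - replace z with (- Z.of_nat (Z.to_nat (-z)))%Z by lia. rewrite opp_IZR, <- INR_IZR_INZ.
   set (k := Z.to_nat (-z)). rewrite <- (sin_period (x + 2 * PI * - INR k) k). f_equal; ring. Qed.

Lemma IZR_div_split (k : Z) (d : nat) : (1 <= d)%nat ->
  IZR k / INR d = IZR (k mod Z.of_nat d) / INR d + IZR (k / Z.of_nat d).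
Proof. intros Hd. assert (Hd' : INR d <> 0) by (apply not_0_INR; lia).
 rewrite (Z.div_mod k (Z.of_nat d)) at 1 by lia. rewrite plus_IZR, mult_IZR, <- INR_IZR_INZ.
 field; auto. Qed.

Lemma cos_modd (k k' : Z) (d : nat) : (1 <= d)%nat -> (k mod Z.of_nat d = k' mod Z.of_nat d)%Z ->
  cos (2 * PI * (IZR k / INR d)) = cos (2 * PI * (IZR k' / INR d)).
Proof. intros Hd H. rewrite (IZR_div_split k), (IZR_div_split k') by auto. rewrite H.
 rewrite !Rmult_plus_distr_l, !cos_Zper. reflexivity. Qed.
Lemma sin_modd (k k' : Z) (d : nat) : (1 <= d)%nat -> (k mod Z.of_nat d = k' mod Z.of_nat d)%Z ->
  sin (2 * PI * (IZR k / INR d)) = sin (2 * PI * (IZR k' / INR d)).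
Proof. intros Hd H. rewrite (IZR_div_split k), (IZR_div_split k') by auto. rewrite H.
 rewrite !Rmult_plus_distr_l, !sin_Zper. reflexivity. Qed.

Lemma Zq_S q : Zq (S q) = Zq q ++ [Z.of_nat q].
Proof. unfold Zq. rewrite seq_S, map_app. reflexivity. Qed.

Lemma telescope x k : 2 * sin (x/2) * sumR (fun a => cos (IZR a * x)) (Zq k)
   = sin ((INR k - /2) * x) + sin (x/2).
Proof. induction k.
 - unfold Zq; simpl. rewrite sumR_nil. replace ((0 - /2) * x) with (- (x/2)) by field.
   rewrite sin_neg; ring.
 - rewrite Zq_S, sumR_app, Rmult_plus_distr_l, IHk, sumR_cons, sumR_nil.
   rewrite <- INR_IZR_INZ, S_INR.
   replace ((INR k + 1 - /2) * x) with (INR k * x + x/2) by field.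
   replace ((INR k - /2) * x) with (INR k * x - x/2) by field.
   rewrite sin_plus, sin_minus. ring. Qed.

Lemma ortho (q : nat) (m : Z) : (1 <= q)%nat ->
  sumR (fun a => cos (2 * PI * (IZR (a * m) / INR q))) (Zq q)
  = if Z.eqb (m mod Z.of_nat q) 0 then INR q else 0.
Proof. intros Hq. assert (Hq' : INR q <> 0) by (apply not_0_INR; lia).
 destruct (Z.eqb_spec (m mod Z.of_nat q) 0) as [H|H].
 - rewrite (sumR_ext_in _ (fun _ => 1)). rewrite sumR_const. unfold Zq. rewrite length_map, length_seq. ring.
   intros a _. rewrite (cos_modd _ 0 q Hq). rewrite Rdiv_0_l, Rmult_0_r; apply cos_0.
   rewrite Zmod_0_l. rewrite Z.mul_mod, H by lia. rewrite Z.mul_0_r. apply Zmod_0_l.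
 - set (x := 2 * PI * (IZR m / INR q)).
   rewrite (sumR_ext_in _ (fun a => cos (IZR a * x))).
   2:{ intros a _. f_equal. unfold x. rewrite mult_IZR. field. auto. }
   assert (Hs : sin (x/2) <> 0).
   { intros Hs. apply sin_eq_0_0 in Hs. destruct Hs as [k Hk]. apply H.
     unfold x in Hk. assert (IZR m = IZR k * INR q).
     { apply Rmult_eq_reg_r with (PI / INR q). 2:{ apply Rmult_integral_contrapositive; split; [apply PI_neq0|apply Rinv_neq_0_compat; auto]. }
       transitivity (2 * PI * (IZR m / INR q) / 2). field. auto. rewrite Hk. field. auto. }
     rewrite INR_IZR_INZ, <- mult_IZR in H0. apply eq_IZR in H0. rewrite H0. apply Z.mod_mul. lia. }
   pose proof (telescope x q) as T.
   assert (E : sin ((INR q - /2) * x) = - sin (x/2)).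
   { replace ((INR q - /2) * x) with (- (x/2) + 2 * PI * IZR m).
     rewrite sin_Zper, sin_neg; auto. unfold x. field. auto. }
   rewrite E in T. apply Rmult_eq_reg_l with (2 * sin (x/2)). rewrite T. ring.
   intro; apply Hs; lra. Qed.

Lemma Zq_add a b : Zq (a + b) = Zq a ++ map (fun j => Z.of_nat (a + j)) (seq 0 b).
Proof. unfold Zq. rewrite seq_app, map_app. f_equal. simpl.
 rewrite <- (map_map (fun j => (a + j)%nat) Z.of_nat). f_equal.
 clear. replace a with (a + 0)%nat at 1 by lia. generalize 0%nat. induction b; intros s; simpl; auto.
 f_equal. rewrite <- IHb. f_equal; lia. Qed.

Lemma Zq_block (g d : nat) (h : Z -> R) : (1 <= d)%nat ->
  (forall x, h x = h (x mod Z.of_nat d)%Z) -> sumR h (Zq (g * d)) = INR g * sumR h (Zq d).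
Proof. intros Hd Hh. induction g.
 - simpl. unfold Zq; simpl. rewrite sumR_nil; ring.
 - rewrite Nat.mul_succ_l, Zq_add, sumR_app, IHg, sumR_map, S_INR.
   assert (sumR (fun x => h (Z.of_nat (g * d + x))) (seq 0 d) = sumR h (Zq d)).
   { unfold Zq. rewrite sumR_map. apply sumR_ext_in. intros j _.
     rewrite Hh, (Hh (Z.of_nat j)). f_equal. rewrite Nat2Z.inj_add, Nat2Z.inj_mul.
     rewrite Z.add_comm, Z.mod_add by lia. reflexivity. }
   rewrite H; ring. Qed.

Definition modv (d : nat) (s : list Z) : list Z := map (fun x => (x mod Z.of_nat d)%Z) s.

Lemma modv_idem d s : (1 <= d)%nat -> modv d (modv d s) = modv d s.
Proof. intros Hd. unfold modv. rewrite map_map. apply map_ext. intros; apply Z.mod_mod; lia. Qed.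

Lemma Zqn_reduce n (g d : nat) (h : list Z -> R) : (1 <= d)%nat ->
  (forall s, h s = h (modv d s)) -> sumR h (Zqn n (g * d)) = INR g ^ n * sumR h (Zqn n d).
Proof. intros Hd. revert h. induction n; intros h Hh.
 - simpl. ring.
 - simpl Zqn. rewrite !sumR_flat_map.
   rewrite (sumR_ext_in (fun x => sumR h (map (cons x) (Zqn n (g * d))))
                        (fun x => INR g ^ n * sumR (fun t => h (x :: t)) (Zqn n d))).
   2:{ intros x _. rewrite sumR_map. apply IHn. intros s. rewrite Hh, (Hh (x :: modv d s)).
       unfold modv at 1 3; simpl. fold (modv d s). rewrite modv_idem; auto. }
   rewrite sumR_scal, sumR_swap.
   rewrite (sumR_ext_in (fun y => sumR (fun x => h (x :: y)) (Zq (g * d)))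
                        (fun y => INR g * sumR (fun x => h (x :: y)) (Zq d))).
   2:{ intros t _. apply Zq_block; auto. intros x. rewrite Hh, (Hh ((x mod Z.of_nat d)%Z :: t)).
       unfold modv; simpl. rewrite Z.mod_mod by lia. reflexivity. }
   rewrite sumR_scal. rewrite (sumR_ext_in (fun x => sumR h (map (cons x) (Zqn n d)))
                                (fun x => sumR (fun t => h (x :: t)) (Zqn n d))).
   2:{ intros; apply sumR_map. }
   rewrite (sumR_swap (fun x t => h (x :: t))). simpl; ring. Qed.

Lemma mono_mod d e s : (1 <= d)%nat ->
  (mono_eval e (modv d s) mod Z.of_nat d = mono_eval e s mod Z.of_nat d)%Z.
Proof. intros Hd. revert s; induction e; intros s; destruct s; simpl; auto.
 rewrite Z.mul_mod by lia. rewrite IHe. rewrite <- Zpow_facts.Zpower_mod by lia.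
 rewrite <- Z.mul_mod by lia. reflexivity. Qed.

Lemma poly_mod d Q s : (1 <= d)%nat ->
  (poly_eval Q (modv d s) mod Z.of_nat d = poly_eval Q s mod Z.of_nat d)%Z.
Proof. intros Hd. induction Q; simpl; auto. unfold poly_eval in *; simpl.
 rewrite Z.add_mod by lia. rewrite IHQ. rewrite Z.mul_mod by lia. rewrite mono_mod by auto.
 rewrite <- Z.mul_mod by lia. rewrite <- Z.add_mod by lia. reflexivity. Qed.

Lemma dotZ_zero n s : dotZ s (repeat 0%Z n) = 0%Z.
Proof. revert s; induction n; intros s; destruct s; unfold dotZ in *; simpl; auto.
 rewrite IHn. lia. Qed.

Lemma zero_in n q : (1 <= q)%nat -> In (repeat 0%Z n) (Zqn n q).
Proof. intros Hq. induction n; simpl; auto. apply in_flat_map. exists 0%Z. split.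
 unfold Zq. apply in_map_iff. exists 0%nat. split; auto. apply in_seq. lia.
 apply in_map; auto. Qed.

Definition hh (Q : zpoly) (d : nat) (a : Z) (s : list Z) : R :=
  cos (2 * PI * (IZR (poly_eval Q s * a) / INR d)).
Definition hs (Q : zpoly) (d : nat) (a : Z) (s : list Z) : R :=
  sin (2 * PI * (IZR (poly_eval Q s * a) / INR d)).

Lemma hh_inv Q d a s : (1 <= d)%nat -> hh Q d a s = hh Q d a (modv d s).
Proof. intros Hd. unfold hh. apply cos_modd; auto. rewrite Z.mul_mod, (Z.mul_mod (poly_eval Q (modv d s))) by lia.
 rewrite poly_mod; auto. Qed.
Lemma hs_inv Q d a s : (1 <= d)%nat -> hs Q d a s = hs Q d a (modv d s).
Proof. intros Hd. unfold hs. apply sin_modd; auto. rewrite Z.mul_mod, (Z.mul_mod (poly_eval Q (modv d s))) by lia.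
 rewrite poly_mod; auto. Qed.

Lemma phase_red Q n g d a s : (1 <= g)%nat -> (1 <= d)%nat ->
  phase Q (g * d) (Z.of_nat g * a) (repeat 0%Z n) s = 2 * PI * (IZR (poly_eval Q s * a) / INR d).
Proof. intros Hg Hd. unfold phase. rewrite dotZ_zero, Z.add_0_r. rewrite mult_INR.
 assert (INR g <> 0) by (apply not_0_INR; lia). assert (INR d <> 0) by (apply not_0_INR; lia).
 rewrite !mult_IZR, <- INR_IZR_INZ. field. auto. Qed.

Lemma F_re_red n Q g d a : (1 <= g)%nat -> (1 <= d)%nat ->
  F_re n Q (g * d) (Z.of_nat g * a) (repeat 0%Z n) = F_re n Q d a (repeat 0%Z n).
Proof. intros Hg Hd. unfold F_re.
 change (fold_right Rplus 0 (map ?f ?l)) with (sumR f l).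
 rewrite (sumR_ext_in _ (hh Q d a)). 2:{ intros; unfold hh; rewrite phase_red; auto. }
 rewrite (sumR_ext_in (fun s => cos (phase Q d a (repeat 0%Z n) s)) (hh Q d a)).
 2:{ intros; unfold hh, phase. rewrite dotZ_zero, Z.add_0_r. reflexivity. }
 rewrite Zqn_reduce; auto. 2:{ intros; apply hh_inv; auto. }
 rewrite mult_INR, Rpow_mult_distr.
 assert (INR g <> 0) by (apply not_0_INR; lia). assert (INR d <> 0) by (apply not_0_INR; lia).
 field. split; apply pow_nonzero; auto. Qed.

Lemma F_im_red n Q g d a : (1 <= g)%nat -> (1 <= d)%nat ->
  F_im n Q (g * d) (Z.of_nat g * a) (repeat 0%Z n) = F_im n Q d a (repeat 0%Z n).
Proof. intros Hg Hd. unfold F_im.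
 change (fold_right Rplus 0 (map ?f ?l)) with (sumR f l).
 rewrite (sumR_ext_in _ (hs Q d a)). 2:{ intros; unfold hs; rewrite phase_red; auto. }
 rewrite (sumR_ext_in (fun s => sin (phase Q d a (repeat 0%Z n) s)) (hs Q d a)).
 2:{ intros; unfold hs, phase. rewrite dotZ_zero, Z.add_0_r. reflexivity. }
 rewrite Zqn_reduce; auto. 2:{ intros; apply hs_inv; auto. }
 rewrite mult_INR, Rpow_mult_distr.
 assert (INR g <> 0) by (apply not_0_INR; lia). assert (INR d <> 0) by (apply not_0_INR; lia).
 field. split; apply pow_nonzero; auto. Qed.

Lemma F_abs_red n Q g d a : (1 <= g)%nat -> (1 <= d)%nat ->
  F_abs n Q (g * d) (Z.of_nat g * a) (repeat 0%Z n) = F_abs n Q d a (repeat 0%Z n).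
Proof. intros; unfold F_abs; rewrite F_re_red, F_im_red; auto. Qed.

Lemma len_filter {A} (p : A -> bool) l : INR (length (filter p l)) = sumR (fun s => if p s then 1 else 0) l.
Proof. induction l; [reflexivity|]. simpl. rewrite sumR_cons. destruct (p a); simpl length.
 rewrite S_INR, IHl; ring. rewrite IHl; ring. Qed.

Lemma count_identity n Q lam q : (1 <= q)%nat ->
  INR q * INR (V_card n Q lam q) =
  sumR (fun a => sumR (fun s => cos (2 * PI * (IZR (a * (poly_eval Q s - lam)) / INR q))) (Zqn n q)) (Zq q).
Proof. intros Hq. unfold V_card. rewrite len_filter, <- sumR_scal.
 rewrite <- sumR_swap. apply sumR_ext_in. intros s _. rewrite ortho by auto.
 destruct (Z.eqb _ _); ring. Qed.

Lemma cs_bound c s A B : c^2 + s^2 = 1 -> c * A + s * B <= sqrt (A^2 + B^2).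
Proof. intros H. apply Rle_trans with (Rabs (c*A + s*B)). apply Rle_abs.
 rewrite <- (sqrt_pow2 (Rabs (c*A+s*B))) by apply Rabs_pos. apply sqrt_le_1_alt.
 rewrite pow2_abs. assert (0 <= (c*B - s*A)^2) by apply pow2_ge_0.
 replace (A^2+B^2) with ((c^2+s^2)*(A^2+B^2)) by (rewrite H; ring). nra. Qed.

Lemma per_a_bound n Q lam q a : (1 <= q)%nat ->
  sumR (fun s => cos (2 * PI * (IZR (a * (poly_eval Q s - lam)) / INR q))) (Zqn n q)
  <= INR q ^ n * F_abs n Q q a (repeat 0%Z n).
Proof. intros Hq. set (phi := 2 * PI * (IZR (a * lam) / INR q)).
 assert (Hq' : INR q <> 0) by (apply not_0_INR; lia).
 rewrite (sumR_ext_in _ (fun s => cos phi * cos (phase Q q a (repeat 0%Z n) s) + sin phi * sin (phase Q q a (repeat 0%Z n) s))).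
 2:{ intros s _. unfold phase. rewrite dotZ_zero, Z.add_0_r.
     replace (2 * PI * (IZR (a * (poly_eval Q s - lam)) / INR q)) with
       (2 * PI * (IZR (poly_eval Q s * a) / INR q) - phi).
     rewrite cos_minus; ring. unfold phi. rewrite !mult_IZR, minus_IZR. field. auto. }
 rewrite sumR_plus, !sumR_scal.
 assert (HQ : 0 < INR q ^ n) by (apply pow_lt; apply lt_0_INR; lia).
 set (A := sumR (fun s => cos (phase Q q a (repeat 0%Z n) s)) (Zqn n q)).
 set (B := sumR (fun s => sin (phase Q q a (repeat 0%Z n) s)) (Zqn n q)).
 assert (F_abs n Q q a (repeat 0%Z n) = / INR q ^ n * sqrt (A^2 + B^2)).
 { unfold F_abs, F_re, F_im. fold (sumR (fun s => cos (phase Q q a (repeat 0%Z n) s)) (Zqn n q)).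
   fold (sumR (fun s => sin (phase Q q a (repeat 0%Z n) s)) (Zqn n q)). fold A B.
   replace ((/ INR q ^ n * A) ^ 2 + (/ INR q ^ n * B) ^ 2) with ((/ INR q ^ n)^2 * (A^2 + B^2)) by ring.
   rewrite sqrt_mult_alt. rewrite sqrt_pow2. reflexivity.
   left; apply Rinv_0_lt_compat; auto. apply pow2_ge_0. }
 rewrite H. rewrite <- Rmult_assoc, Rinv_r, Rmult_1_l by lra.
 apply cs_bound. pose proof (sin2_cos2 phi). unfold Rsqr in H0. lra. Qed.

Definition Dd (q : nat) (a : Z) : nat := Z.to_nat (Z.of_nat q / Z.gcd a (Z.of_nat q)).

Lemma gcd_facts (q : nat) (a : Z) : (1 <= q)%nat -> (0 <= a < Z.of_nat q)%Z ->
  let g := Z.gcd a (Z.of_nat q) in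
  (0 < g)%Z /\ Z.of_nat q = (g * (Z.of_nat q / g))%Z /\ a = (g * (a / g))%Z /\
  (1 <= Z.of_nat q / g <= Z.of_nat q)%Z /\ (0 <= a / g < Z.of_nat q / g)%Z /\
  Z.gcd (a / g) (Z.of_nat q / g) = 1%Z.
Proof. intros Hq Ha g.
 assert (Hg : (0 < g)%Z). { assert (0 <= g)%Z by apply Z.gcd_nonneg. assert (g <> 0%Z).
   { intro H0. apply Z.gcd_eq_0 in H0. lia. } lia. }
 assert (Hq1 : Z.of_nat q = (g * (Z.of_nat q / g))%Z).
 { apply Z_div_exact_full_2; [lia|]. apply Z.mod_divide; [lia|]. apply Z.gcd_divide_r. }
 assert (Ha1 : a = (g * (a / g))%Z).
 { apply Z_div_exact_full_2; [lia|]. apply Z.mod_divide; [lia|]. apply Z.gcd_divide_l. }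
 split; auto. split; auto. split; auto. split; [|split].
 - split; nia.
 - split. apply Z.div_pos; lia. nia.
 - apply Z.gcd_div_gcd; auto; lia. Qed.

Lemma F_abs_bound n Q (beta C : R) (q : nat) (a : Z) :
  (forall (q : nat) (a : Z) (av : list Z), (1 <= q)%nat -> in_Uq q a -> In av (Zqn n q) ->
    Rpower (INR q) beta * F_abs n Q q a av <= C) ->
  (1 <= q)%nat -> In a (Zq q) ->
  F_abs n Q q a (repeat 0%Z n) <= C * / Rpower (INR (Dd q a)) beta.
Proof. intros Hadm Hq Hin.
 assert (Ha : (0 <= a < Z.of_nat q)%Z). { unfold Zq in Hin. apply in_map_iff in Hin.
   destruct Hin as [k [<- Hk]]. apply in_seq in Hk. lia. }
 destruct (gcd_facts q a Hq Ha) as (Hg & Hq1 & Ha1 & Hd & Ha' & Hgcd).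
 set (g := Z.gcd a (Z.of_nat q)) in *.
 set (gn := Z.to_nat g). set (dn := Dd q a).
 assert (Hqgd : q = (gn * dn)%nat). { unfold gn, dn, Dd. fold g. apply Nat2Z.inj. rewrite Nat2Z.inj_mul, !Z2Nat.id; lia. }
 assert (Hag : a = (Z.of_nat gn * (a / g))%Z). { unfold gn. rewrite Z2Nat.id; lia. }
 assert (Hdn : Z.of_nat dn = (Z.of_nat q / g)%Z). { unfold dn, Dd. fold g. rewrite Z2Nat.id; lia. }
 assert (Hdn1 : (1 <= dn)%nat) by lia.
 assert (Hgn1 : (1 <= gn)%nat) by lia.
 assert (E : F_abs n Q q a (repeat 0%Z n) = F_abs n Q dn (a / g) (repeat 0%Z n)).
 { rewrite Hqgd at 1. rewrite Hag at 1. apply F_abs_red; auto. }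
 rewrite E. fold dn.
 assert (Hp : 0 < Rpower (INR dn) beta) by (unfold Rpower; apply exp_pos).
 specialize (Hadm dn (a / g)%Z (repeat 0%Z n) Hdn1).
 assert (Hu : in_Uq dn (a / g)). { unfold in_Uq. rewrite Hdn. split; auto. }
 specialize (Hadm Hu (zero_in n dn Hdn1)).
 apply Rmult_le_reg_l with (Rpower (INR dn) beta); auto.
 rewrite (Rmult_comm C), <- Rmult_assoc, Rinv_r, Rmult_1_l by lra. auto. Qed.

Lemma sum_ind s k x (f : nat -> R) : (s <= x < s + k)%nat ->
  sumR (fun e => if Nat.eqb e x then f e else 0) (seq s k) = f x.
Proof. revert s; induction k; intros s H; [lia|]. simpl seq. rewrite sumR_cons.
 destruct (Nat.eqb_spec s x).
 - subst. rewrite (sumR_ext_in _ (fun _ => 0)). rewrite sumR_zero; ring.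
   intros y Hy. apply in_seq in Hy. destruct (Nat.eqb_spec y x); [lia|auto].
 - rewrite IHk by lia. ring. Qed.

Lemma count_mult m e : (1 <= m)%nat ->
  sumR (fun a => if Z.eqb (a mod Z.of_nat m) 0 then 1 else 0) (Zq (e * m)) = INR e.
Proof. intros Hm. rewrite Zq_block; auto.
 2:{ intros x. rewrite Z.mod_mod by lia. reflexivity. }
 replace (sumR _ (Zq m)) with 1. ring.
 unfold Zq. destruct m; [lia|]. rewrite <- cons_seq. simpl map. rewrite sumR_cons.
 rewrite Zmod_0_l. simpl Z.eqb. rewrite (sumR_ext_in _ (fun _ => 0)). rewrite sumR_zero; ring.
 intros x Hx. apply in_map_iff in Hx. destruct Hx as [j [<- Hj]]. apply in_seq in Hj.
 rewrite Z.mod_small by lia. destruct (Z.eqb_spec (Z.of_nat j) 0); [lia|auto]. Qed.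

Lemma D_facts q a : (1 <= q)%nat -> In a (Zq q) ->
  (1 <= Dd q a <= q)%nat /\ q = (Dd q a * (q / Dd q a))%nat /\ (a mod Z.of_nat (q / Dd q a) = 0)%Z.
Proof. intros Hq Hin.
 assert (Ha : (0 <= a < Z.of_nat q)%Z). { unfold Zq in Hin. apply in_map_iff in Hin.
   destruct Hin as [k [<- Hk]]. apply in_seq in Hk. lia. }
 destruct (gcd_facts q a Hq Ha) as (Hg & Hq1 & Ha1 & Hd & Ha' & Hgcd).
 set (g := Z.gcd a (Z.of_nat q)) in *.
 assert (Hdn : Z.of_nat (Dd q a) = (Z.of_nat q / g)%Z). { unfold Dd. fold g. rewrite Z2Nat.id; lia. }
 assert (Hm : Z.of_nat (q / Dd q a) = g).
 { rewrite Nat2Z.inj_div, Hdn. rewrite Hq1 at 1. rewrite Z.div_mul; lia. }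
 split; [lia|split].
 - apply Nat2Z.inj. rewrite Nat2Z.inj_mul, Hm, Hdn. lia.
 - rewrite Hm. rewrite Ha1, Z.mul_comm. apply Z.mod_mul. lia. Qed.

Lemma count_bound (w : nat -> R) q : (1 <= q)%nat -> (forall e, 0 <= w e) ->
  sumR (fun a => w (Dd q a)) (Zq q) <= sumR (fun e => INR e * w e) (seq 1 q).
Proof. intros Hq Hw.
 rewrite (sumR_ext_in _ (fun a => sumR (fun e => if Nat.eqb e (Dd q a) then w e else 0) (seq 1 q))).
 2:{ intros a Ha. rewrite sum_ind; auto. destruct (D_facts q a Hq Ha); lia. }
 rewrite sumR_swap. apply sumR_le_in. intros e He. apply in_seq in He.
 rewrite (sumR_ext_in _ (fun a => w e * (if Nat.eqb e (Dd q a) then 1 else 0))).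
 2:{ intros; destruct (Nat.eqb _ _); ring. }
 rewrite sumR_scal, Rmult_comm. apply Rmult_le_compat_r; auto.
 destruct (Nat.eqb_spec q (e * (q / e))) as [E|E].
 - apply Rle_trans with (sumR (fun a => if Z.eqb (a mod Z.of_nat (q / e)) 0 then 1 else 0) (Zq q)).
   + apply sumR_le_in. intros a Ha. destruct (Nat.eqb_spec e (Dd q a)).
     * subst e. destruct (D_facts q a Hq Ha) as (_ & _ & H3). rewrite H3. simpl; lra.
     * destruct (Z.eqb _ _); lra.
   + assert (1 <= q / e)%nat. { destruct (q / e)%nat; lia. }
     rewrite E at 1. rewrite count_mult; auto. lra.
 - rewrite (sumR_ext_in _ (fun _ => 0)). rewrite sumR_zero. apply pos_INR.
   intros a Ha. destruct (Nat.eqb_spec e (Dd q a)); auto. subst e.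
   destruct (D_facts q a Hq Ha) as (_ & H2 & _). lia. Qed.

Lemma ln_le_sub1 z : 0 < z -> ln z <= z - 1.
Proof. intros Hz. pose proof (exp_ineq1_le (ln z)). rewrite exp_ln in H; auto. lra. Qed.

Lemma step_ineq eps x : 0 < eps -> 1 <= x ->
  (x + 1) * / Rpower (x + 1) (2 + eps) <= / eps * (/ Rpower x eps - / Rpower (x + 1) eps).
Proof. intros He Hx. set (y := x + 1).
 assert (Hy : 0 < y) by (unfold y; lra).
 assert (Rx : 0 < Rpower x eps) by (unfold Rpower; apply exp_pos).
 assert (Ry : 0 < Rpower y eps) by (unfold Rpower; apply exp_pos).
 assert (E2 : Rpower y (2 + eps) = y^2 * Rpower y eps).
 { rewrite Rpower_plus. replace 2 with (INR 2) by (simpl; ring). rewrite Rpower_pow; auto. }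
 assert (Key : Rpower x eps * (1 + eps / y) <= Rpower y eps).
 { unfold Rpower. replace (eps * ln y) with (eps * ln x + eps * (ln y - ln x)) by ring.
   rewrite exp_plus. apply Rmult_le_compat_l. left; apply exp_pos.
   apply Rle_trans with (1 + eps * (ln y - ln x)); [|apply exp_ineq1_le].
   assert (ln (x / y) <= x / y - 1) by (apply ln_le_sub1; apply Rdiv_lt_0_compat; lra).
   unfold Rdiv in H; rewrite ln_mult, ln_Rinv in H by (try apply Rinv_0_lt_compat; lra). assert (x / y - 1 = - (/ y)) by (unfold y; field; lra).
   assert (eps / y = eps * / y) by reflexivity. nra. }
 rewrite E2. 
 apply Rmult_le_reg_l with (eps * y * Rpower x eps * Rpower y eps).
 { repeat apply Rmult_lt_0_compat; lra. }
 replace (eps * y * Rpower x eps * Rpower y eps * (y * / (y ^ 2 * Rpower y eps))) with (eps * Rpower x eps)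
   by (field; lra).
 replace (eps * y * Rpower x eps * Rpower y eps * (/ eps * (/ Rpower x eps - / Rpower y eps)))
   with (y * (Rpower y eps - Rpower x eps)) by (field; lra).
 replace (eps / y) with (eps * / y) in Key by reflexivity.
 assert (Rpower x eps * (1 + eps * / y) * y = Rpower x eps * y + eps * Rpower x eps) by (field; lra).
 nra. Qed.

Lemma series eps q : 0 < eps -> (1 <= q)%nat ->
  sumR (fun e => INR e * / Rpower (INR e) (2 + eps)) (seq 1 q) <= 1 + / eps - / eps * / Rpower (INR q) eps.
Proof. intros He Hq. induction q; [lia|]. destruct q.
 - simpl. rewrite sumR_cons, sumR_nil. change (INR 1) with 1. unfold Rpower. rewrite ln_1, !Rmult_0_r, exp_0. 
   rewrite !Rinv_1, !Rmult_1_r. lra.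
 - rewrite seq_S, sumR_app, sumR_cons, sumR_nil. specialize (IHq ltac:(lia)).
   replace (1 + S q)%nat with (S (S q)) by lia. rewrite (S_INR (S q)).
   pose proof (step_ineq eps (INR (S q)) He). assert (1 <= INR (S q)) by (rewrite S_INR; pose proof (pos_INR q); lra).
   specialize (H H0). lra. Qed.

Lemma series_bound eps q : 0 < eps -> (1 <= q)%nat ->
  sumR (fun e => INR e * / Rpower (INR e) (2 + eps)) (seq 1 q) <= 1 + / eps.
Proof. intros He Hq. pose proof (series eps q He Hq).
 assert (0 < Rpower (INR q) eps) by (unfold Rpower; apply exp_pos).
 assert (0 < / eps * / Rpower (INR q) eps) by (apply Rmult_lt_0_compat; apply Rinv_0_lt_compat; auto). lra. Qed.

Theorem corollary3p3 (n : nat) (Q : zpoly) :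
  is_form n Q -> alpha_gt n Q 2 ->
  exists C : R, forall (q : nat) (lam : Z), (1 <= q)%nat ->
    Rpower (INR q) (1 - INR n) * INR (V_card n Q lam q) <= C.
Proof.
 intros _ [beta [Hb [Hb0 [C HC]]]].
 set (eps := beta - 2). assert (He : 0 < eps) by (unfold eps; lra).
 assert (HC0 : 0 <= C).
 { assert (Hu : in_Uq 1 0). { unfold in_Uq; simpl; split; [lia|reflexivity]. }
   specialize (HC 1%nat 0%Z (repeat 0%Z n) (le_n 1) Hu (zero_in n 1 (le_n 1))).
   assert (0 <= Rpower (INR 1) beta * F_abs n Q 1 0 (repeat 0%Z n)).
   { apply Rmult_le_pos. left; unfold Rpower; apply exp_pos. unfold F_abs; apply sqrt_pos. }
   lra. }
 exists (C * (1 + / eps)). intros q lam Hq.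
 assert (Hq0 : 0 < INR q) by (apply lt_0_INR; lia).
 assert (HQ : 0 < INR q ^ n) by (apply pow_lt; auto).
 assert (ER : Rpower (INR q) (1 - INR n) = INR q * / INR q ^ n).
 { unfold Rminus. rewrite Rpower_plus, Rpower_1, Rpower_Ropp, Rpower_pow; auto. }
 rewrite ER.
 set (w := fun e : nat => / Rpower (INR e) beta).
 assert (Hw : forall e, 0 <= w e). { intros; unfold w. left; apply Rinv_0_lt_compat; unfold Rpower; apply exp_pos. }
 assert (H1 : INR q * INR (V_card n Q lam q) <= INR q ^ n * C * (1 + / eps)).
 { rewrite count_identity by auto.
   apply Rle_trans with (sumR (fun a => INR q ^ n * (C * w (Dd q a))) (Zq q)).
   { apply sumR_le_in. intros a Ha. eapply Rle_trans. apply per_a_bound; auto.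
     apply Rmult_le_compat_l. lra. apply (F_abs_bound n Q beta C q a HC Hq Ha). }
   rewrite sumR_scal, sumR_scal. rewrite Rmult_assoc. apply Rmult_le_compat_l; [lra|].
   apply Rmult_le_compat_l; auto.
   eapply Rle_trans. apply count_bound; auto.
   unfold w. replace beta with (2 + eps) by (unfold eps; ring).
   apply series_bound; auto. }
 apply Rmult_le_reg_l with (INR q ^ n); auto.
 replace (INR q ^ n * (INR q * / INR q ^ n * INR (V_card n Q lam q))) with (INR q * INR (V_card n Q lam q))
   by (field; lra).
 lra. Qed.
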